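(* For every $\lambda\in P^+$, $\mathrm{Stab}_{\mathcal W}(\lambda):=\{w\in\mathcal W:w(\lambda)=\lambda\}$ equals the submonoid of $\mathcal W$ generated by those $r_i$, $i\in I$, with $\alpha_i^\vee(\lambda)=0$.
   Context: $I$ countable, $A=(a_{ij})$ a Borcherds–Cartan matrix ($a_{ii}=2$ or $a_{ii}\in\mathbb Z_{\le 0}$; $a_{ij}\in\mathbb Z_{\le0}$ for $i\ne j$; $a_{ij}=0\iff a_{ji}=0$), $I^{re}=\{a_{ii}=2\}$, $I^{im}=I\setminus I^{re}$. Datum $(A,\{\alpha_i\},\{\alpha_i^\vee\},P,P^\vee)$: $P^\vee$ free $\mathbb Z$-module, $P=\mathrm{Hom}(P^\vee,\mathbb Z)$, $\mathfrak h=P^\vee\otimes\mathbb C$, $\alpha_i^\vee(\alpha_j)=a_{ij}$, $\{\alpha_i^\vee\}$ and $\{\alpha_i\}$ linearly independent; $P^+=\{\lambda\in P:\alpha_i^\vee(\lambda)\ge0\ \forall i\}$. $r_i(\mu)=\mu-\alpha_i^\vee(\mu)\alpha_i$. The monoid $\mathcal W$ is generated by $r_i$ ($i\in I$) with relations $r_i^2=1$ ($i\in I^{re}$), $(r_ir_j)^m=(r_jr_i)^m=1$ for $i\neq j\in I^{re}$ when $r_ir_j\in GL(\mathfrak h^* )$ has order $m\in\{2,3,4,6\}$, and $r_ir_j=r_jr_i$ for $i\in I^{im}$, $j\in I\setminus\{i\}$ with $a_{ij}=0$; it acts on $\mathfrak h^*$ via $r_i\mapsto r_i$. *)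

(* Defs.v *)
From HB Require Import structures.
From mathcomp Require Import all_boot all_order all_algebra.
From mathcomp Require Import finmap.
Set Implicit Arguments. Unset Strict Implicit. Unset Printing Implicit Defensive.
Import Order.TTheory GRing.Theory Num.Theory.
Local Open Scope ring_scope.
Local Open Scope fset_scope.

(* Conventions.
   - I : countType is the (countable) index set.
   - P^vee is the free Z-module with basis B, realised as the finitely
     supported functions B -> int (type [coweight B]).
   - P = Hom(P^vee, Z) is then identified with all functions B -> int
     (type [weight B]); the pairing <h, mu> = sum_b h(b) mu(b).
   - Elements of the monoid W are represented by words (seq I) modulo the
     monoid congruence [wequiv] generated by the defining relations; the
     word [:: i1; ...; ik] stands for r_{i1} ... r_{ik}. *)

Definition coweight (B : choiceType) := {fsfun B -> int with 0%R}.
Definition weight (B : choiceType) := B -> int.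

Definition pairing (B : choiceType) (h : coweight B) (mu : weight B) : int :=
  \sum_(b <- finsupp h) h b * mu b.

Definition BC_matrix (I : countType) (A : I -> I -> int) : Prop :=
  [/\ forall i, A i i = 2 \/ A i i <= 0,
      forall i j, i != j -> A i j <= 0
    & forall i j, A i j = 0 <-> A j i = 0].

Definition is_real (I : countType) (A : I -> I -> int) (i : I) : bool :=
  A i i == 2.

Definition realization (I : countType) (B : choiceType) (A : I -> I -> int)
    (av : I -> coweight B) (al : I -> weight B) : Prop :=
  [/\ forall i j, pairing (av i) (al j) = A i j,
      forall (s : seq I) (c : I -> int), uniq s ->
        (forall b, \sum_(i <- s) c i * av i b = 0) ->
        forall i, i \in s -> c i = 0
    &
      forall (s : seq I) (c : I -> int), uniq s ->
        (forall b, \sum_(i <- s) c i * al i b = 0) ->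
        forall i, i \in s -> c i = 0].

Definition dominant (I : countType) (B : choiceType) (av : I -> coweight B)
    (lam : weight B) : Prop :=
  forall i, 0 <= pairing (av i) lam.

Definition refl (I : countType) (B : choiceType) (av : I -> coweight B)
    (al : I -> weight B) (i : I) (mu : weight B) : weight B :=
  fun b => mu b - pairing (av i) mu * al i b.

Definition act (I : countType) (B : choiceType) (av : I -> coweight B)
    (al : I -> weight B) (w : seq I) (mu : weight B) : weight B :=
  foldr (refl av al) mu w.

Definition order_is (I : countType) (B : choiceType) (av : I -> coweight B)
    (al : I -> weight B) (i j : I) (m : nat) : Prop :=
  (0 < m)%N /\
  (forall mu, iter m (fun nu => refl av al i (refl av al j nu)) mu = mu) /\
  (forall k, (0 < k < m)%N ->
     exists mu, iter k (fun nu => refl av al i (refl av al j nu)) mu <> mu).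

Definition alt_word (I : countType) (i j : I) (m : nat) : seq I :=
  flatten (nseq m [:: i; j]).

Inductive wrel (I : countType) (B : choiceType) (A : I -> I -> int)
    (av : I -> coweight B) (al : I -> weight B) : seq I -> seq I -> Prop :=
  | wrel_sq i : is_real A i -> wrel A av al [:: i; i] [::]
  | wrel_braid_l i j m : is_real A i -> is_real A j -> i != j ->
      m \in [:: 2; 3; 4; 6]%N -> order_is av al i j m ->
      wrel A av al (alt_word i j m) [::]
  | wrel_braid_r i j m : is_real A i -> is_real A j -> i != j ->
      m \in [:: 2; 3; 4; 6]%N -> order_is av al i j m ->
      wrel A av al (alt_word j i m) [::]
  | wrel_comm i j : ~~ is_real A i -> j != i -> A i j = 0 ->
      wrel A av al [:: i; j] [:: j; i].

Inductive wequiv (I : countType) (B : choiceType) (A : I -> I -> int)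
    (av : I -> coweight B) (al : I -> weight B) : seq I -> seq I -> Prop :=
  | wequiv_rel x u v y : wrel A av al u v ->
      wequiv A av al (x ++ u ++ y) (x ++ v ++ y)
  | wequiv_refl u : wequiv A av al u u
  | wequiv_sym u v : wequiv A av al u v -> wequiv A av al v u
  | wequiv_trans u v t : wequiv A av al u v -> wequiv A av al v t ->
      wequiv A av al u t.

Definition in_stab (I : countType) (B : choiceType) (av : I -> coweight B)
    (al : I -> weight B) (lam : weight B) (w : seq I) : Prop :=
  act av al w lam = lam.

Definition in_parabolic (I : countType) (B : choiceType) (A : I -> I -> int)
    (av : I -> coweight B) (al : I -> weight B) (lam : weight B) (w : seq I)
    : Prop :=
  exists2 u : seq I, all (fun i => pairing (av i) lam == 0) u
                   & wequiv A av al w u.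

(* Main.v *)
Require Import Defs.
From HB Require Import structures.
From mathcomp Require Import all_boot all_order all_algebra.
From mathcomp Require Import finmap.
From mathcomp Require Import zify ring lra.
From Stdlib Require Import FunctionalExtensionality Classical.
Set Implicit Arguments. Unset Strict Implicit. Unset Printing Implicit Defensive.
Import Order.TTheory GRing.Theory Num.Theory.
Local Open Scope ring_scope.

Lemma sum_restrict (T : eqType) (R : nmodType) (s1 s : seq T) (f : T -> R) :
  uniq s1 -> uniq s -> {subset s1 <= s} ->
  \sum_(i <- s) (if i \in s1 then f i else 0) = \sum_(i <- s1) f i.
Proof.
move=> u1 u hs; rewrite -big_mkcond -big_filter; apply: perm_big.
apply: uniq_perm; first exact: filter_uniq.
  done.
by move=> x; rewrite mem_filter; case: (boolP (x \in s1)) => //= /hs ->.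
Qed.

Lemma min_nat (P : nat -> Prop) n : P n ->
  exists m, P m /\ forall k, (k < m)%N -> ~ P k.
Proof.
elim/ltn_ind: n => n IH Pn.
case: (classic (exists k, (k < n)%N /\ P k)) => [[k [hk Pk]]|h].
  exact: IH Pk.
exists n; split => // k hk Pk; apply: h; by exists k.
Qed.

Section Dev.
Variables (I : countType) (B : choiceType) (A : I -> I -> int)
    (av : I -> coweight B) (al : I -> weight B).
Hypothesis hA : BC_matrix A.
Hypothesis hD : realization A av al.

Local Notation r := (refl av al).
Local Notation act := (act av al).
Local Notation pr := (fun i mu => pairing (av i) mu).

Lemma pairing_lin (h : coweight B) (x y : int) (mu nu : weight B) :
  pairing h (fun b => x * mu b + y * nu b) = x * pairing h mu + y * pairing h nu.
Proof.
rewrite /pairing !mulr_sumr -big_split /=; apply: eq_bigr => b _; ring.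
Qed.

Lemma pairing_ext (h : coweight B) (mu nu : weight B) : (forall b, mu b = nu b) ->
  pairing h mu = pairing h nu.
Proof. by move=> e; rewrite /pairing; apply: eq_bigr => b _; rewrite e. Qed.

Lemma pairing_refl i j mu : pairing (av i) (r j mu) = pairing (av i) mu - pairing (av j) mu * A i j.
Proof.
have -> : pairing (av i) (r j mu) = pairing (av i) (fun b => 1 * mu b + (- pairing (av j) mu) * al j b).
  by apply: pairing_ext => b; rewrite /refl; ring.
case: hD => h1 _ _; rewrite pairing_lin h1; ring.
Qed.

Lemma refl_lin i (x y : int) (mu nu : weight B) :
  r i (fun b => x * mu b + y * nu b) = (fun b => x * r i mu b + y * r i nu b).
Proof.
apply: functional_extensionality => b; rewrite /refl pairing_lin; ring.
Qed.

Lemma act_lin w (x y : int) (mu nu : weight B) :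
  act w (fun b => x * mu b + y * nu b) = (fun b => x * act w mu b + y * act w nu b).
Proof. elim: w => [//|i w IH] /=; by rewrite IH refl_lin. Qed.

Lemma act_cat w1 w2 mu : act (w1 ++ w2) mu = act w1 (act w2 mu).
Proof. by rewrite /Defs.act foldr_cat. Qed.

Lemma act_cons i w mu : act (i :: w) mu = r i (act w mu).
Proof. by []. Qed.

Lemma refl_invol i mu : is_real A i -> r i (r i mu) = mu.
Proof.
move=> /eqP hi; apply: functional_extensionality => b.
rewrite {1}/refl pairing_refl hi /refl; ring.
Qed.


Local Notation we := (wequiv A av al).

Lemma we_ctx x u v y : we u v -> we (x ++ u ++ y) (x ++ v ++ y).
Proof.
elim=> {u v}.
- move=> x0 u v y0 h.
  have e : forall t, x ++ (x0 ++ t ++ y0) ++ y = (x ++ x0) ++ t ++ (y0 ++ y).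
    by move=> t; rewrite !catA.
  by rewrite !e; apply: wequiv_rel.
- by move=> u; apply: wequiv_refl.
- by move=> u v _ h; apply: wequiv_sym.
- by move=> u v t _ h1 _ h2; apply: wequiv_trans h2.
Qed.

Lemma we_catl x u v : we u v -> we (x ++ u) (x ++ v).
Proof. by move=> h; have := we_ctx x [::] h; rewrite !cats0. Qed.

Lemma we_catr y u v : we u v -> we (u ++ y) (v ++ y).
Proof. by move=> h; have := we_ctx [::] y h. Qed.

Lemma we_cat u1 v1 u2 v2 : we u1 v1 -> we u2 v2 -> we (u1 ++ u2) (v1 ++ v2).
Proof.
move=> h1 h2; apply: wequiv_trans (we_catl u1 h2) _; exact: we_catr.
Qed.

Lemma we_rel u v : wrel A av al u v -> we u v.
Proof. by move=> h; have := wequiv_rel [::] [::] h; rewrite /= !cats0. Qed.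

Lemma alt_act i j m mu : act (alt_word i j m) mu = iter m (fun nu => r i (r j nu)) mu.
Proof. by elim: m => [//|m IH]; rewrite /alt_word /= -/(alt_word i j m) IH. Qed.

Lemma iter_swap (T : Type) (f g : T -> T) m x :
  g (iter m (fun y => f (g y)) x) = iter m (fun y => g (f y)) (g x).
Proof. by elim: m => [//|m IH]; rewrite !iterS -IH. Qed.

Lemma refl_comm i j mu : A i j = 0 -> A j i = 0 -> r i (r j mu) = r j (r i mu).
Proof.
move=> h1 h2; apply: functional_extensionality => b.
rewrite /refl !pairing_refl h1 h2; ring.
Qed.

Lemma wrel_act u v mu : wrel A av al u v -> act u mu = act v mu.
Proof.
case.
- by move=> i hi /=; rewrite refl_invol.
- by move=> i j m _ _ _ _ [_ [ho _]]; rewrite alt_act ho.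
- move=> i j m hi hj _ _ [_ [ho _]]; rewrite alt_act /=.
  rewrite -{1}(refl_invol mu hj) -iter_swap ho refl_invol //.
- move=> i j hi hji h /=; apply: refl_comm => //.
  by case: hA => _ _ h3; apply/h3.
Qed.

Lemma we_act u v mu : we u v -> act u mu = act v mu.
Proof.
move=> h; elim: h mu => {u v}.
- by move=> x u v y h mu; rewrite !act_cat (wrel_act _ h).
- by [].
- by move=> u v _ h mu; rewrite h.
- by move=> u v t _ h1 _ h2 mu; rewrite h1 h2.
Qed.

Lemma alt_odd (i j : I) m : odd (size (alt_word i j m)) = false.
Proof. by elim: m => [//|m IH]; rewrite /alt_word /= -/(alt_word i j m) IH. Qed.

Lemma wrel_odd u v : wrel A av al u v -> odd (size u) = odd (size v).
Proof. by case=> //= *; rewrite alt_odd. Qed.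

Lemma we_odd u v : we u v -> odd (size u) = odd (size v).
Proof.
elim=> {u v} //.
- by move=> x u v y h; rewrite !size_cat !oddD (wrel_odd h).
- by move=> u v t _ h1 _ h2; rewrite h1.
Qed.


Definition Pos (beta : weight B) := exists (s : seq I) (c : I -> int),
  [/\ uniq s, (forall i, 0 <= c i) & beta = (fun b => \sum_(i <- s) c i * al i b)].

Lemma Pos_al i : Pos (al i).
Proof.
exists [:: i], (fun _ => 1); split => //.
by apply: functional_extensionality => b; rewrite big_seq1 mul1r.
Qed.

Lemma merge_sums (s1 s2 : seq I) (c1 c2 : I -> int) : uniq s1 -> uniq s2 ->
  let s := undup (s1 ++ s2) in
  let c1' := fun i => if i \in s1 then c1 i else 0 in
  let c2' := fun i => if i \in s2 then c2 i else 0 in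
  [/\ uniq s,
     forall b, \sum_(i <- s1) c1 i * al i b = \sum_(i <- s) c1' i * al i b
   & forall b, \sum_(i <- s2) c2 i * al i b = \sum_(i <- s) c2' i * al i b].
Proof.
move=> u1 u2 s c1' c2'; split; first exact: undup_uniq.
- move=> b; rewrite -(@sum_restrict _ _ s1 s) //; last first.
    by move=> x hx; rewrite mem_undup mem_cat hx.
  exact: undup_uniq.
  by apply: eq_bigr => i _; rewrite /c1'; case: (i \in s1) => //; rewrite mul0r.
- move=> b; rewrite -(@sum_restrict _ _ s2 s) //; last first.
    by move=> x hx; rewrite mem_undup mem_cat hx orbT.
  exact: undup_uniq.
  by apply: eq_bigr => i _; rewrite /c2'; case: (i \in s2) => //; rewrite mul0r.
Qed.

Lemma Pos_lin beta gamma (x y : int) : Pos beta -> Pos gamma -> 0 <= x -> 0 <= y ->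
  Pos (fun b => x * beta b + y * gamma b).
Proof.
move=> [s1 [c1 [u1 p1 ->]]] [s2 [c2 [u2 p2 ->]]] hx hy.
have [us e1 e2] := merge_sums c1 c2 u1 u2.
set s := undup _ in us e1 e2.
exists s, (fun i => x * (if i \in s1 then c1 i else 0) + y * (if i \in s2 then c2 i else 0)).
split => //.
  move=> i; apply: addr_ge0; apply: mulr_ge0 => //; by case: (_ \in _).
apply: functional_extensionality => b; rewrite e1 e2 !mulr_sumr -big_split /=.
by apply: eq_bigr => i _; ring.
Qed.

Lemma Pos_zero beta gamma : Pos beta -> Pos gamma -> (forall b, beta b + gamma b = 0) ->
  beta = (fun _ => 0).
Proof.
move=> [s1 [c1 [u1 p1 eb]]] [s2 [c2 [u2 p2 eg]]] h.
have [us e1 e2] := merge_sums c1 c2 u1 u2.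
set s := undup _ in us e1 e2.
set c1' := fun i => if i \in s1 then c1 i else 0.
set c2' := fun i => if i \in s2 then c2 i else 0.
case: hD => _ _ hind.
have z : forall i, i \in s -> c1' i + c2' i = 0.
  apply: (hind s (fun i => c1' i + c2' i)) => // b.
  rewrite -[RHS](h b) eb eg /= e1 e2 -big_split /=.
  by apply: eq_bigr => i _; rewrite mulrDl.
rewrite eb; apply: functional_extensionality => b; rewrite e1 big1_seq // => i /andP [_ hi].
have := z i hi; rewrite /c1' /c2'.
have g1 : 0 <= (if i \in s1 then c1 i else 0) by case: (_ \in _).
have g2 : 0 <= (if i \in s2 then c2 i else 0) by case: (_ \in _).
move=> hz; have -> : (if i \in s1 then c1 i else 0) = 0 by lia.
by rewrite mul0r.
Qed.

Lemma al_neq0 i : al i <> (fun _ => 0).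
Proof.
move=> e; case: hD => _ _ hind.
have := hind [:: i] (fun _ => 1) erefl.
have h : forall b, \sum_(k <- [:: i]) (fun _ : I => 1) k * al k b = 0.
  by move=> b; rewrite big_seq1 mul1r e.
by move/(_ h i); rewrite mem_seq1 eqxx => /(_ isT).
Qed.


Definition red (w : seq I) := forall v, we w v -> (size w <= size v)%N.

Lemma ex_red w : exists u, we w u /\ red u.
Proof.
have [m [[u [hu su]] hmin]] := @min_nat (fun n => exists u, we w u /\ size u = n) (size w)
  (ex_intro _ w (conj (wequiv_refl _ _ _ w) erefl)).
exists u; split => // v huv; rewrite su leqNgt; apply/negP => hlt.
apply: (hmin _ hlt); exists v; split => //; exact: wequiv_trans huv.
Qed.

Lemma red_catl x y : red (x ++ y) -> red x.
Proof.
move=> h v hv; have := h _ (we_catr y hv); by rewrite !size_cat leq_add2r.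
Qed.

Lemma red_catr x y : red (x ++ y) -> red y.
Proof.
move=> h v hv; have := h _ (we_catl x hv); by rewrite !size_cat leq_add2l.
Qed.

Lemma red_we_size u v : red u -> red v -> we u v -> size u = size v.
Proof.
move=> hu hv e; apply/eqP; rewrite eqn_leq hu //=; apply: hv; exact: wequiv_sym.
Qed.

Lemma we_kk k : is_real A k -> we [:: k; k] [::].
Proof. by move=> hk; apply: we_rel; apply: wrel_sq. Qed.

Lemma red_kk x k y : is_real A k -> ~ red (x ++ [:: k; k] ++ y).
Proof.
move=> hk h; have := h _ (we_ctx x y (we_kk hk)).
rewrite !size_cat /=; lia.
Qed.


Definition comb (i j : I) (p : int * int) : weight B := fun t => p.1 * al i t + p.2 * al j t.

Definition step (i j k : I) (p : int * int) : int * int :=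
  if k == i then (p.1 - (p.1 * A i i + p.2 * A i j), p.2)
  else (p.1, p.2 - (p.1 * A j i + p.2 * A j j)).

Lemma pairing_comb k i j p : pairing (av k) (comb i j p) = p.1 * A k i + p.2 * A k j.
Proof. by case: hD => h1 _ _; rewrite /comb pairing_lin !h1. Qed.

Lemma refl_comb i j k p : i != j -> (k == i) || (k == j) ->
  r k (comb i j p) = comb i j (step i j k p).
Proof.
move=> hij /orP [] /eqP ->; apply: functional_extensionality => t;
  rewrite /refl pairing_comb /step /comb ?eqxx //=.
  ring.
by rewrite eq_sym (negbTE hij) /=; ring.
Qed.

Lemma act_comb i j x p : i != j -> all (fun k => (k == i) || (k == j)) x ->
  act x (comb i j p) = comb i j (foldr (step i j) p x).
Proof.
move=> hij; elim: x => [//|k x IH] /= /andP [hk hx].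
by rewrite IH // refl_comb.
Qed.

Lemma al_comb i j : al i = comb i j (1, 0).
Proof. by apply: functional_extensionality => t; rewrite /comb /=; ring. Qed.

Lemma stepI i j p : step i j i p = (p.1 - (p.1 * A i i + p.2 * A i j), p.2).
Proof. by rewrite /step eqxx. Qed.

Lemma stepJ i j p : i != j -> step i j j p = (p.1, p.2 - (p.1 * A j i + p.2 * A j j)).
Proof. by move=> h; rewrite /step eq_sym (negbTE h). Qed.


Lemma Aii i : is_real A i \/ (~~ is_real A i /\ A i i <= 0).
Proof.
case: (boolP (is_real A i)) => h; [by left|right; split => //].
by case: hA => h1 _ _; case: (h1 i) => // e; move: h; rewrite /is_real e eqxx.
Qed.

Lemma Aii_im i : ~~ is_real A i -> A i i <= 0.
Proof. by move=> h; case: (Aii i) => [h'|[]//]; rewrite h' in h. Qed.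

Lemma Aii_re i : is_real A i -> A i i = 2.
Proof. by move/eqP. Qed.

Lemma Aij_le0 i j : i != j -> A i j <= 0.
Proof. by case: hA => _ h _; apply: h. Qed.

Lemma Asym0 i j : A i j = 0 -> A j i = 0.
Proof. by case: hA => _ _ h; move/h. Qed.

Lemma inv_IM i j x : i != j -> ~~ is_real A i -> all (fun k => (k == i) || (k == j)) x ->
  let p := foldr (step i j) (1, 0) x in
  [/\ 0 <= p.1, 0 <= p.2 & (is_real A j -> p.2 <= p.1 * - A j i)].
Proof.
move=> hij hi; have hii := Aii_im hi; have hij0 := Aij_le0 hij.
have hji0 : A j i <= 0 by apply: Aij_le0; rewrite eq_sym.
elim: x => [|k x IH] /=; first by split => //; rewrite mul1r; lia.
case/andP => /orP [] /eqP -> /IH; case: (foldr _ _ _) => a b /= [h1 h2 h3].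
- rewrite stepI /=; split => //.
    have : 0 <= a * - A i i by nia.
    have : 0 <= b * - A i j by nia.
    lia.
  move=> /h3 h4.
  have : 0 <= a * - A i i by nia.
  have : 0 <= b * - A i j by nia.
  nia.
- rewrite stepJ //=; case: (Aii j) => [hj|[hj hjj]].
    rewrite (Aii_re hj); have := h3 hj; split => //; nia.
  split => //; first nia; by rewrite (negbTE hj).
Qed.

Lemma inv_RI i j x p : i != j -> is_real A i -> ~~ is_real A j ->
  all (fun k => (k == i) || (k == j)) x ->
  0 <= p.2 -> 0 <= p.1 -> p.1 <= p.2 * - A i j ->
  let q := foldr (step i j) p x in
  [/\ 0 <= q.2, 0 <= q.1 & q.1 <= q.2 * - A i j].
Proof.
move=> hij hi hj; have hjj := Aii_im hj; have hij0 := Aij_le0 hij.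
have hji0 : A j i <= 0 by apply: Aij_le0; rewrite eq_sym.
move=> + h1 h2 h3; elim: x => [|k x IH] /=; first by split.
case/andP => /orP [] /eqP -> /IH; case: (foldr _ _ _) => a b /= [g1 g2 g3].
- rewrite stepI /= (Aii_re hi); split => //; nia.
- rewrite stepJ //=; split => //; nia.
Qed.


Fixpoint altr (e f : I) (n : nat) : seq I :=
  if n is n'.+1 then altr f e n' ++ [:: e] else [::].

Lemma altr_split e f n k :
  altr e f (n + k) = (if odd k then altr f e n else altr e f n) ++ altr e f k.
Proof.
elim: k e f => [|k IH] e f; first by rewrite addn0 cats0.
rewrite addnS /= IH /=; case: (odd k) => /=; by rewrite catA.
Qed.

Lemma altr_cons e f k : altr e f k.+1 = (if odd k then f else e) :: altr e f k.
Proof. by rewrite -add1n altr_split; case: (odd k). Qed.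

Lemma alt_word_altr e f m : alt_word e f m = altr f e m.*2.
Proof.
elim: m => [//|m IH].
have -> : alt_word e f m.+1 = [:: e; f] ++ alt_word e f m by [].
rewrite IH doubleS -add2n altr_split odd_double; done.
Qed.

Lemma altr_all e f n : all (fun k => (k == e) || (k == f)) (altr e f n).
Proof.
apply/allP; elim: n e f => [//|n IH] e f k /=; rewrite mem_cat mem_seq1.
by case/orP => [/IH|->//]; rewrite orbC.
Qed.

Lemma all_real_of (i j : I) x : is_real A i -> is_real A j ->
  all (fun k => (k == i) || (k == j)) x -> all (is_real A) x.
Proof.
move=> hi hj; elim: x => [//|k x IH] /= /andP [/orP [] /eqP -> /IH ->]; by rewrite ?hi ?hj.
Qed.

Lemma we_revp p : all (is_real A) p -> we (rev p ++ p) [::].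
Proof.
elim: p => [|k p IH] /=.
  by move=> _; exact: wequiv_refl.
case/andP => hk hp; rewrite rev_cons -cats1 -catA.
have e : rev p ++ [:: k] ++ k :: p = rev p ++ [:: k; k] ++ p by [].
rewrite e; apply: wequiv_trans (we_ctx (rev p) p (we_kk hk)) _; exact: IH.
Qed.

Lemma altr_shape i j x : i != j -> is_real A i -> is_real A j ->
  all (fun k => (k == i) || (k == j)) x -> red (x ++ [:: i]) -> x = altr j i (size x).
Proof.
move=> hij hi hj; elim: x => [//|k x IH] hall hred; move: hall => /= /andP [hk hx].
have hr : red (x ++ [:: i]) by apply: (@red_catr [:: k]).
have ex := IH hx hr.
change (k :: x = altr j i (size x).+1).
rewrite altr_cons -ex; congr (_ :: _).
have e2 : x ++ [:: i] = (if odd (size x) then j else i) :: altr i j (size x).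
  by rewrite {1}ex -altr_cons.
move: hred; rewrite cat_cons e2.
have hkr : is_real A k by case/orP: hk => /eqP ->.
case: (odd (size x)); case/orP: hk => /eqP -> //= hred;
  exfalso; apply: (@red_kk [::] _ (altr i j (size x)) _ hred) => //.
Qed.


Lemma size_altr e f n : size (altr e f n) = n.
Proof. by elim: n e f => [//|n IH] e f /=; rewrite size_cat IH addn1. Qed.

Lemma altr_not_red i j m : i != j -> is_real A i -> is_real A j ->
  m \in [:: 2; 3; 4; 6]%N -> order_is av al i j m -> ~ red (altr i j m.+1).
Proof.
move=> hij hi hj hm ho hred.
have m0 : (0 < m)%N by case: ho.
have hw : we (alt_word j i m) [::].
  by apply: we_rel; apply: wrel_braid_r.
have e : m.*2 = (m.-1 + m.+1)%N by rewrite -addnn; lia.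
move: hw; rewrite alt_word_altr e altr_split.
set P := (if _ then _ else _) => hw.
have hP : all (is_real A) P.
  apply: (@all_real_of i j) => //; rewrite /P; case: (odd _) => //;
  [apply/allP => k hk; rewrite orbC; move/allP: (altr_all j i m.-1) => /(_ k hk) //
  | exact: altr_all].
have h1 : we (altr i j m.+1) (rev P ++ P ++ altr i j m.+1).
  have := we_catr (altr i j m.+1) (we_revp hP); rewrite -catA => h.
  exact: wequiv_sym h.
have h2 : we (altr i j m.+1) (rev P).
  apply: wequiv_trans h1 _; have := we_catl (rev P) hw; by rewrite cats0.
have := hred _ h2; rewrite size_rev /P size_altr; case: (odd _); rewrite size_altr; lia.
Qed.

Lemma red_bound i j m n : i != j -> is_real A i -> is_real A j ->
  m \in [:: 2; 3; 4; 6]%N -> order_is av al i j m ->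
  red (altr j i n ++ [:: i]) -> (n < m)%N.
Proof.
move=> hij hi hj hm ho hred; rewrite ltnNge; apply/negP => hmn.
have e : altr j i n ++ [:: i] = altr i j n.+1 by [].
have e2 : n.+1 = ((n - m) + m.+1)%N by lia.
move: hred; rewrite e e2 altr_split => /red_catr.
exact: altr_not_red.
Qed.

Definition Fi (i j : I) (x : int) (p : int * int) := (p.1 - x - (p.1 * A i i + p.2 * A i j), p.2).
Definition Fj (i j : I) (y : int) (p : int * int) := (p.1, p.2 - y - (p.1 * A j i + p.2 * A j j)).

Lemma pairing_aff k i j mu p :
  pairing (av k) (fun t => mu t + comb i j p t) = pairing (av k) mu + p.1 * A k i + p.2 * A k j.
Proof.
rewrite (@pairing_ext _ _ (fun t => 1 * mu t + 1 * comb i j p t)); last by move=> b; ring.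
by rewrite pairing_lin pairing_comb; ring.
Qed.

Lemma iter_aff i j k mu :
  iter k (fun nu => r i (r j nu)) mu =
  (fun t => mu t + comb i j (iter k (fun p => Fi i j (pairing (av i) mu) (Fj i j (pairing (av j) mu) p)) (0, 0)) t).
Proof.
elim: k => [|k IH].
  by apply: functional_extensionality => t; rewrite /comb /=; ring.
rewrite !iterS IH; set p := iter k _ _.
apply: functional_extensionality => t.
rewrite {1}/refl pairing_refl !pairing_aff /refl pairing_aff /comb /Fi /Fj /=.
ring.
Qed.

Lemma comb0 i j p : i != j -> comb i j p = (fun _ => 0) -> p = (0, 0).
Proof.
move=> hij e; case: hD => _ _ hind.
have h := hind [:: i; j] (fun k => if k == i then p.1 else p.2).
have u : uniq [:: i; j] by rewrite /= inE hij.
have hs : forall b, \sum_(k <- [:: i; j]) (if k == i then p.1 else p.2) * al k b = 0.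
  move=> b; rewrite big_cons big_seq1 eqxx eq_sym (negbTE hij).
  by have := congr1 (fun f => f b) e; rewrite /comb.
have h1 : p.1 = 0.
  by have := h u hs i; rewrite /= inE eqxx /=; apply.
have h2 : p.2 = 0.
  by have := h u hs j; rewrite /= !inE eqxx orbT eq_sym (negbTE hij); apply.
by case: p h1 h2 {e hs h} => a b /= -> ->.
Qed.

Lemma order_of i j m : i != j -> (0 < m)%N ->
  (forall x y, iter m (fun p => Fi i j x (Fj i j y p)) (0, 0) = (0, 0)) ->
  (forall k, (0 < k < m)%N ->
     iter k (fun p => Fi i j (A i i) (Fj i j (A j i) p)) (0, 0) != (0, 0)) ->
  order_is av al i j m.
Proof.
move=> hij m0 h1 h2; split => //; split.
  move=> mu; rewrite iter_aff h1; apply: functional_extensionality => t.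
  by rewrite /comb /=; ring.
move=> k hk; exists (al i); rewrite iter_aff; case: hD => hp _ _; rewrite !hp => e.
move: (h2 _ hk) => /negP; apply.
apply/eqP; apply: (comb0 hij); apply: functional_extensionality => t.
have := congr1 (fun f => f t) e => /=; lia.
Qed.


Ltac ord_tac hij hii hjj hd hc :=
  apply: (order_of hij) => //;
  [ move=> x y; rewrite /Fi /Fj /= hii hjj hd hc; congr pair; ring
  | let k := fresh "k" in
    move=> k /andP [];
    do 6? [case: k => [|k] //];
    rewrite /Fi /Fj /= hii hjj hd hc => _ _;
    apply/negP => /eqP [] ; lia ].

Ltac st_tac ji hii hjj hd hc :=
  let n := fresh "n" in
  move=> n; do 6? [case: n => [|n] //]; rewrite /= /step ?eqxx ?ji /= ?hii ?hjj ?hd ?hc;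
  split; lia.

Lemma small_case i j : i != j -> is_real A i -> is_real A j -> A i j * A j i <= 3 ->
  exists m, [/\ m \in [:: 2; 3; 4; 6]%N, order_is av al i j m &
    forall n, (n < m)%N -> 0 <= (foldr (step i j) (1, 0) (altr j i n)).1 /\
                            0 <= (foldr (step i j) (1, 0) (altr j i n)).2].
Proof.
move=> hij hi hj hp.
have ji : (j == i) = false by rewrite eq_sym (negbTE hij).
have hii := Aii_re hi; have hjj := Aii_re hj.
have hd0 := Aij_le0 hij.
have hc0 : A j i <= 0 by apply: Aij_le0; rewrite eq_sym.
have hz : A i j = 0 -> A j i = 0 by apply: Asym0.
have hz' : A j i = 0 -> A i j = 0 by apply: Asym0.
have hd : A i j = 0 \/ A i j = -1 \/ A i j = -2 \/ A i j = -3 by nia.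
have hc : A j i = 0 \/ A j i = -1 \/ A j i = -2 \/ A j i = -3 by nia.
case: hd => [hd|[hd|[hd|hd]]]; case: hc => [hc|[hc|[hc|hc]]];
  rewrite ?hd ?hc in hp hz hz'; try (exfalso; lia).
- exists 2%N; split => //; [ord_tac hij hii hjj hd hc | st_tac ji hii hjj hd hc].
- exists 3%N; split => //; [ord_tac hij hii hjj hd hc | st_tac ji hii hjj hd hc].
- exists 4%N; split => //; [ord_tac hij hii hjj hd hc | st_tac ji hii hjj hd hc].
- exists 6%N; split => //; [ord_tac hij hii hjj hd hc | st_tac ji hii hjj hd hc].
- exists 4%N; split => //; [ord_tac hij hii hjj hd hc | st_tac ji hii hjj hd hc].
- exists 6%N; split => //; [ord_tac hij hii hjj hd hc | st_tac ji hii hjj hd hc].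
Qed.


Lemma big_case i j n : i != j -> is_real A i -> is_real A j -> 4 <= A i j * A j i ->
  let q := foldr (step i j) (1, 0) (altr j i n) in
  [/\ 0 <= q.1, 0 <= q.2 &
     if odd n then 2 * q.1 <= - A i j * q.2 else - A i j * q.2 <= 2 * q.1].
Proof.
move=> hij hi hj hp.
have hii := Aii_re hi; have hjj := Aii_re hj.
have hd0 := Aij_le0 hij.
have hc0 : A j i <= 0 by apply: Aij_le0; rewrite eq_sym.
elim: n => [|n IH].
  by rewrite /= mulr0; split => //; lia.
move: IH; rewrite altr_cons [foldr _ _ (_ :: _)]/=; case: (foldr _ _ _) => a b /= [h1 h2 h3].
case: (odd n) h3 => /= h3.
- rewrite stepI /= hii; split; nia.
- rewrite stepJ //= hjj; split; nia.
Qed.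


Lemma red_we_same u v : red u -> we u v -> size v = size u -> red v.
Proof.
move=> hu huv e w hvw; rewrite e; apply: hu; exact: wequiv_trans hvw.
Qed.

Lemma stepJ10 i j : i != j -> step i j j (1, 0) = (1, - A j i).
Proof. by move=> h; rewrite stepJ //=; congr pair; ring. Qed.

Lemma RI0 i j x : i != j -> is_real A i -> ~~ is_real A j -> A i j = 0 ->
  all (fun k => (k == i) || (k == j)) x -> red (x ++ [:: i]) ->
  foldr (step i j) (1, 0) x = (1, 0).
Proof.
move=> hij hi hj h0; have hji := Asym0 h0.
elim/last_ind: x => [//|x k IH]; rewrite all_rcons => /andP [hk hx] hred.
rewrite foldr_rcons; case/orP: hk => /eqP ek; subst k.
  exfalso; apply: (@red_kk x i [::] hi); by rewrite -cats1 -catA in hred.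
have hr : red (x ++ [:: i]).
  have e : rcons x j ++ [:: i] = x ++ [:: j; i] by rewrite -cats1 -catA.
  rewrite e in hred.
  have hw : we (x ++ [:: j; i]) (x ++ [:: i; j]).
    apply: we_catl; apply: we_rel; apply: wrel_comm => //.
  have := red_we_same hred hw; rewrite !size_cat /= => /(_ erefl).
  by rewrite -[[:: i; j]]/([:: i] ++ [:: j]) catA => /red_catl.
by rewrite stepJ10 // hji oppr0 IH.
Qed.

Lemma R2 i j x : i != j -> all (fun k => (k == i) || (k == j)) x -> red x ->
  (is_real A i -> red (x ++ [:: i])) ->
  exists a b, [/\ 0 <= a, 0 <= b & act x (al i) = comb i j (a, b)].
Proof.
move=> hij hx hred hred'.
rewrite (al_comb i j) act_comb //.
suff : 0 <= (foldr (step i j) (1, 0) x).1 /\ 0 <= (foldr (step i j) (1, 0) x).2.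
  case: (foldr _ _ _) => a b /= [ha hb]; by exists a, b.
case: (boolP (is_real A i)) => hi; last first.
  by have [h1 h2 _] := inv_IM hij hi hx.
have hr := hred' hi.
case: (boolP (is_real A j)) => hj.
  rewrite (altr_shape hij hi hj hx hr).
  case: (lerP (A i j * A j i) 3) => hp.
    have [m [hm ho hst]] := small_case hij hi hj hp.
    apply: hst; apply: (red_bound hij hi hj hm ho).
    by rewrite -(altr_shape hij hi hj hx hr).
  have hp4 : 4 <= A i j * A j i by lia.
  by have [h1 h2 _] := big_case (size x) hij hi hj hp4.
case: (A i j =P 0) => h0.
  by rewrite (RI0 hij hi hj h0 hx hr).
move: hx hr; case/lastP: x {hred hred'} => [|x k]; first by move=> _ _ /=; split.
rewrite all_rcons => /andP [hk hx] hr; rewrite foldr_rcons.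
case/orP: hk => /eqP ek; subst k.
  exfalso; apply: (@red_kk x i [::] hi); by rewrite -cats1 -catA in hr.
have hji : A j i <> 0 by move/Asym0.
have hd0 := Aij_le0 hij.
have hc0 : A j i <= 0 by apply: Aij_le0; rewrite eq_sym.
rewrite stepJ10 //.
pose p0 : int * int := (1, - A j i).
have k1 : 0 <= p0.2 by rewrite /=; lia.
have k2 : 0 <= p0.1 by [].
have k3 : p0.1 <= p0.2 * - A i j by rewrite /=; nia.
have [g1 g2 _] := inv_RI hij hi hj hx k1 k2 k3.
by split.
Qed.


Lemma act_scale w (c : int) mu : act w (fun t => c * mu t) = (fun t => c * act w mu t).
Proof.
have := act_lin w c 0 mu mu.
have -> : (fun b => c * mu b + 0 * mu b) = (fun t => c * mu t).
  by apply: functional_extensionality => t; ring.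
move=> ->; apply: functional_extensionality => t; ring.
Qed.

Lemma Pos_scale beta (c : int) : Pos beta -> 0 <= c -> Pos (fun t => c * beta t).
Proof.
move=> hb hc; have := Pos_lin hb hb hc (lexx 0).
have -> : (fun b => c * beta b + 0 * beta b) = (fun t => c * beta t).
  by apply: functional_extensionality => t; ring.
done.
Qed.

Lemma refl_ne0 k mu : r k mu = (fun _ => 0) -> mu = (fun _ => 0).
Proof.
move=> e; set c := pairing (av k) mu.
have hm : mu = (fun t => c * al k t).
  apply: functional_extensionality => t.
  by have := congr1 (fun f => f t) e; rewrite /refl /= -/c; lia.
have hc : c = c * A k k.
  rewrite {1}/c {1}hm (@pairing_ext _ _ (fun t => c * al k t + 0 * al k t)); last by move=> b; ring.
  by case: hD => h1 _ _; rewrite pairing_lin h1; ring.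
have c0 : c = 0.
  case: (Aii k) => [/Aii_re h|[_ h]]; rewrite ?h in hc; nia.
by rewrite hm c0; apply: functional_extensionality => t; rewrite mul0r.
Qed.

Lemma act_ne0 w mu : mu <> (fun _ => 0) -> act w mu <> (fun _ => 0).
Proof.
elim: w => [//|k w IH] h /=; move/refl_ne0; exact: IH.
Qed.

Definition inIJ (i j : I) (x : seq I) := all (fun k => (k == i) || (k == j)) x.

Lemma not_red w : ~ red w -> exists u, we w u /\ red u /\ (size u < size w)%N.
Proof.
move=> h; have [v [hv hlt]] : exists v, we w v /\ (size v < size w)%N.
  apply: NNPP => hn; apply: h => v hv; rewrite leqNgt; apply/negP => hl.
  by apply: hn; exists v.
have [u [hu ru]] := ex_red v.
exists u; split; first exact: wequiv_trans hu.
split => //; apply: leq_ltn_trans hlt; apply: ru; exact: wequiv_sym.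
Qed.

Lemma core n : forall w, red w -> size w = n ->
  forall i, (is_real A i -> red (w ++ [:: i])) -> Pos (act w (al i)).
Proof.
elim/ltn_ind: n => n IH w hw hn i hi.
case/lastP: w hw hn hi => [|w1 j] hw hn hi; first exact: Pos_al.
have hw1 : red w1 by apply: (@red_catl w1 [:: j]); rewrite cats1.
have sw1 : size w1 = n.-1 by rewrite -hn size_rcons.
have n0 : (0 < n)%N by rewrite -hn size_rcons.
have IH1 : forall v, red v -> (size v < n)%N -> forall k,
    (is_real A k -> red (v ++ [:: k])) -> Pos (act v (al k)).
  by move=> v rv sv k hk; apply: (IH (size v)).
case: (eqVneq i j) => [eij|hij].
  subst j; case: (boolP (is_real A i)) => hri.
    exfalso; apply: (@red_kk w1 i [::] hri).
    by have := hi hri; rewrite -cats1 -catA.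
  rewrite -cats1 act_cat /=.
  have -> : r i (al i) = (fun t => (1 - A i i) * al i t).
    apply: functional_extensionality => t.
    by case: hD => h1 _ _; rewrite /refl h1; ring.
  rewrite act_scale; apply: Pos_scale; last by have := Aii_im hri; lia.
  apply: IH1 => //; first by lia.
  by rewrite (negbTE hri).
pose D k := exists v x, [/\ red v, size v = k, inIJ i j x, we (rcons w1 j) (v ++ x)
                            & (size v + size x)%N = n].
have D0 : D n.-1.
  exists w1, [:: j]; split => //; first by rewrite /inIJ /= eqxx orbT.
    by rewrite cats1; apply: wequiv_refl.
  by rewrite sw1 addn1 prednK.
have [k [[v [x [rv sv hx wvx svx]]] hmin]] := min_nat D0.
have kn : (k < n)%N.
  apply: (@leq_ltn_trans n.-1); last by rewrite prednK.
  by rewrite leqNgt; apply/negP => hl; apply: (hmin _ hl).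
have hvx : red (v ++ x).
  apply: (red_we_same hw wvx); by rewrite size_cat svx -hn size_rcons.
have rx : red x by apply: red_catr hvx.
have Pk : forall k', (k' == i) || (k' == j) -> Pos (act v (al k')).
  move=> k' hk'; apply: IH1 => //; first by rewrite sv.
  move=> hk'r; apply: NNPP => hn'.
  have [u [hu [ru su]]] := not_red hn'.
  have odd_u := we_odd hu.
  rewrite size_cat addn1 /= in su odd_u.
  have su' : (size u < size v)%N.
    move: su; rewrite ltnS leq_eqVlt => /orP [/eqP e|//].
    by rewrite e in odd_u; case: (odd (size v)) odd_u.
  have hvu : we (rcons w1 j) (u ++ k' :: x).
    apply: wequiv_trans wvx _.
    have h1 : we v (v ++ [:: k'; k']).
      by have := we_catl v (we_kk hk'r); rewrite cats0 => /wequiv_sym.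
    have h2 : we (v ++ [:: k'; k']) (u ++ [:: k']).
      by rewrite -[[:: k'; k']]/([:: k'] ++ [:: k']) catA; apply: we_catr.
    have := we_catr x (wequiv_trans h1 h2); by rewrite -catA.
  have hsz := hw _ hvu.
  rewrite size_rcons size_cat /= in hsz.
  apply: (hmin (size u)); first by rewrite -sv.
  exists u, (k' :: x); split => //.
  - by rewrite /inIJ /= hk'.
  - rewrite /=; rewrite size_rcons in hn; lia.
have rxi : is_real A i -> red (x ++ [:: i]).
  move=> hri; apply: NNPP => hn'.
  have [z [hz [_ sz]]] := not_red hn'.
  have := hi hri (v ++ z).
  have -> : (size (rcons w1 j ++ [:: i]) <= size (v ++ z))%N = false.
    rewrite !size_cat hn /=; rewrite size_cat /= in sz; lia.
  move=> h; suff : false by []; apply: h.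
  apply: wequiv_trans (we_catr [:: i] wvx) _; rewrite -catA; exact: we_catl.
have [a [b [ha hb ex]]] := R2 hij hx rx rxi.
rewrite (we_act _ wvx) act_cat ex /comb act_lin.
apply: Pos_lin => //; apply: Pk; by rewrite eqxx ?orbT.
Qed.


Lemma act_rcons w i mu : act (rcons w i) mu = act w (r i mu).
Proof. by rewrite -cats1 act_cat. Qed.

Lemma Pos0 : Pos (fun _ => 0).
Proof.
exists [::], (fun _ => 0); split => //.
by apply: functional_extensionality => t; rewrite big_nil.
Qed.

Lemma act_refl_lam v i lam : act (rcons v i) lam =
  (fun t => act v lam t - pairing (av i) lam * act v (al i) t).
Proof.
rewrite act_rcons.
have -> : r i lam = (fun t => 1 * lam t + (- pairing (av i) lam) * al i t).
  by apply: functional_extensionality => t; rewrite /refl; ring.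
rewrite act_lin; apply: functional_extensionality => t; ring.
Qed.

Lemma Pos_lam lam v : dominant av lam -> red v -> Pos (fun t => lam t - act v lam t).
Proof.
move=> hlam; elim/last_ind: v => [|v i IH] hv.
  have -> : (fun t => lam t - act [::] lam t) = (fun _ => 0).
    by apply: functional_extensionality => t; rewrite /= subrr.
  exact: Pos0.
have hv' : red (v ++ [:: i]) by rewrite cats1.
have rv : red v by apply: red_catl hv'.
have hP := @core (size v) v rv erefl i (fun _ => hv').
have := Pos_lin (IH rv) hP ler01 (hlam i).
have -> : (fun b => 1 * (lam b - act v lam b) + pairing (av i) lam * act v (al i) b)
   = (fun t => lam t - act (rcons v i) lam t).
  by rewrite act_refl_lam; apply: functional_extensionality => t; ring.
done.
Qed.

Lemma stab_dev lam v : dominant av lam -> red v -> act v lam = lam ->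
  exists2 u : seq I, all (fun i => pairing (av i) lam == 0) u & we v u.
Proof.
move=> hlam; elim/last_ind: v => [|v i IH] hv hfix.
  by exists [::] => //; apply: wequiv_refl.
have hv' : red (v ++ [:: i]) by rewrite cats1.
have rv : red v by apply: red_catl hv'.
have hP := @core (size v) v rv erefl i (fun _ => hv').
set c := pairing (av i) lam.
have hc : 0 <= c by apply: hlam.
have g := Pos_scale hP hc.
have hf : forall t, act v lam t - c * act v (al i) t = lam t.
  by move=> t; rewrite -{2}hfix act_refl_lam.
have hz : forall b, (fun t => c * act v (al i) t) b + (fun t => lam t - act v lam t) b = 0.
  by move=> b /=; have := hf b; lia.
have z := Pos_zero g (Pos_lam hlam rv) hz.
have c0 : c = 0.
  apply: NNPP => hc0.
  have e : act v (al i) = (fun _ => 0).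
    apply: functional_extensionality => t.
    have := congr1 (fun f => f t) z => /= /eqP; rewrite mulf_eq0 => /orP [/eqP //|/eqP //].
  exact: (act_ne0 (@al_neq0 i) e).
have hfix' : act v lam = lam.
  by apply: functional_extensionality => t; rewrite -(hf t) c0 mul0r subr0.
have [u hu hvu] := IH rv hfix'.
exists (rcons u i).
  by rewrite all_rcons hu andbT -/c c0.
by rewrite -!cats1; apply: we_catr.
Qed.

Lemma main_dev lam w : dominant av lam ->
  act w lam = lam <-> exists2 u : seq I, all (fun i => pairing (av i) lam == 0) u & we w u.
Proof.
move=> hlam; split.
  move=> hfix; have [w0 [hw0 r0]] := ex_red w.
  have [u hu hw0u] := stab_dev hlam r0 (etrans (esym (we_act lam hw0)) hfix).
  exists u => //; exact: wequiv_trans hw0u.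
case=> u hu hwu; rewrite (we_act lam hwu).
elim: u hu {hwu} => [//|k u IH] /= /andP [/eqP hk hu].
rewrite IH //; apply: functional_extensionality => t; rewrite /refl hk; ring.
Qed.




End Dev.

Theorem lemma2p2p11 (I : countType) (B : choiceType) (A : I -> I -> int)
    (av : I -> coweight B) (al : I -> weight B)
    (hA : BC_matrix A) (hD : realization A av al)
    (lam : weight B) (hlam : dominant av lam) (w : seq I) :
  in_stab av al lam w <-> in_parabolic A av al lam w.
Proof.
rewrite /in_stab /in_parabolic.
exact: (main_dev hA hD w hlam).
Qed.
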